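(* Let $\hat n_1,\hat n_2,\hat n_3\in\mathbb{R}^3$ be unit vectors, $\eta\in[0,1]$, and $\mathcal{M}_k$ the qubit POVM $\{\tfrac12\mathbf{1}+\tfrac\eta2X_k\vec\sigma\cdot\hat n_k\}_{X_k\in\{+1,-1\}}$, and suppose each pair $\mathcal{M}_i,\mathcal{M}_j$ ($i\neq j$) admits a joint measurement $\mathcal{M}_{ij}$. Then in any generalized-noncontextual ontological model of quantum theory, for every ontic state $\lambda$ (and hence for every preparation), $$R_3=\frac13\sum_{i<j}p(X_i\neq X_j|\mathcal{M}_{ij};\lambda)\leq1-\frac\eta3.$$
   Context: An ontological model of quantum theory specifies ontic states $\lambda$, distributions $p(\lambda|P)$ for preparations and response functions $p(X|M;\lambda)$ for measurement procedures reproducing quantum statistics. It is measurement-noncontextual if procedures realizing the same POVM have identical response functions, preparation-noncontextual if procedures realizing the same density operator have identical distributions, and generalized-noncontextual if both hold. A joint measurement of POVMs $\{E^i_{X_i}\},\{E^j_{X_j}\}$ is a POVM $\{F_{X_iX_j}\}$ with $\sum_{X_j}F_{X_iX_j}=E^i_{X_i}$ and $\sum_{X_i}F_{X_iX_j}=E^j_{X_j}$. *)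

(* Defs.v *)
From HB Require Import structures.
From mathcomp Require Import all_boot all_order all_algebra.
From mathcomp Require Import all_classical all_reals all_analysis.
From mathcomp Require Import complex.
Set Implicit Arguments. Unset Strict Implicit. Unset Printing Implicit Defensive.
Import Order.TTheory GRing.Theory Num.Theory.
Local Open Scope ring_scope.

Section Qubit.
Variable R : rcfType.
Local Notation C := R[i].

Definition adj2 (m n : nat) (A : 'M[C]_(m, n)) : 'M[C]_(n, m) :=
  (map_mx (fun z : C => (z^*)%C) A)^T.

(* positive semidefinite operator on C^2: <v, A v> >= 0 for all v
   (in the partial order of C, 0 <= z means z is real and nonnegative) *)
Definition psd (A : 'M[C]_2) : Prop :=
  forall v : 'cV[C]_2, 0 <= (adj2 v *m A *m v) 0 0.

Definition is_density (rho : 'M[C]_2) : Prop := psd rho /\ \tr rho = 1.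

Definition is_povm (O : finType) (E : O -> 'M[C]_2) : Prop :=
  (forall o, psd (E o)) /\ \sum_(o : O) E o = 1%:M.

Definition is_joint_measurement (O1 O2 : finType)
  (E1 : O1 -> 'M[C]_2) (E2 : O2 -> 'M[C]_2) (F : O1 * O2 -> 'M[C]_2) : Prop :=
  is_povm F /\
  (forall x1, \sum_(x2 : O2) F (x1, x2) = E1 x1) /\
  (forall x2, \sum_(x1 : O1) F (x1, x2) = E2 x2).

Definition pauliX : 'M[C]_2 :=
  \matrix_(i < 2, j < 2) (if (i : nat) != j then 1 else 0).
Definition pauliY : 'M[C]_2 :=
  \matrix_(i < 2, j < 2)
    (if ((i : nat) == 0%N) && ((j : nat) == 1%N) then - 'i%C
     else if ((i : nat) == 1%N) && ((j : nat) == 0%N) then 'i%C else 0).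
Definition pauliZ : 'M[C]_2 :=
  \matrix_(i < 2, j < 2)
    (if (i : nat) == j then (if (i : nat) == 0%N then 1 else -1) else 0).

Definition unit_vec (n : 'rV[R]_3) : Prop := \sum_(k < 3) n 0 k ^+ 2 = 1.

Definition sigma_dot (n : 'rV[R]_3) : 'M[C]_2 :=
  (n 0 0)%:C%C *: pauliX + (n 0 1)%:C%C *: pauliY + (n 0 2)%:C%C *: pauliZ.

(* outcome X in {+1,-1}, encoded as a bool: true = +1, false = -1 *)
Definition sgnb (b : bool) : R := if b then 1 else -1.

Definition unsharp_povm (eta : R) (n : 'rV[R]_3) (X : bool) : 'M[C]_2 :=
  (2^-1 : C) *: 1%:M + (sgnb X * eta / 2)%:C%C *: sigma_dot n.

End Qubit.

(* Procedures are abstract; each preparation procedure realizes a density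
   operator and each measurement procedure (with finite outcome set O)
   realizes a POVM.  The set of procedures contains a realization of
   every quantum state / POVM and is closed under convex mixing and classical
   post-processing, which the model represents in the standard way. *)
Record ontological_model (R : realType) (d : measure_display)
    (Lambda : measurableType d) := OntModel {
  prep : Type;
  state : prep -> 'M[R[i]]_2;
  dist : prep -> probability Lambda R;
  meas : finType -> Type;
  povm : forall O : finType, meas O -> O -> 'M[R[i]]_2;
  resp : forall O : finType, meas O -> O -> Lambda -> R;

  state_density : forall P, is_density (state P);
  povm_valid : forall O (M : meas O), is_povm (povm M);
  resp_ge0 : forall O (M : meas O) o l, 0 <= resp M o l;
  resp_sum1 : forall O (M : meas O) l, \sum_(o : O) resp M o l = 1;
  resp_measurable : forall O (M : meas O) o, measurable_fun setT (resp M o);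
  born_rule : forall P O (M : meas O) o,
    (\int[dist P]_l (resp M o l)%:E)%E
      = (complex.Re (\tr (state P *m povm M o)))%:E;

  prep_complete : forall rho, is_density rho -> exists P, state P = rho;
  meas_complete : forall (O : finType) (E : O -> 'M[R[i]]_2),
    is_povm E -> exists M : meas O, povm M = E;

  prep_mixture : forall (p : R) P1 P2, 0 <= p <= 1 ->
    exists P, state P = (p%:C)%C *: state P1 + ((1 - p)%:C)%C *: state P2 /\
      (forall A, measurable A ->
         dist P A = (p%:E * dist P1 A + (1 - p)%:E * dist P2 A)%E);
  meas_mixture : forall (O : finType) (p : R) (M1 M2 : meas O), 0 <= p <= 1 ->
    exists M : meas O,
      (forall o, povm M o = (p%:C)%C *: povm M1 o + ((1 - p)%:C)%C *: povm M2 o) /\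
      (forall o l, resp M o l = p * resp M1 o l + (1 - p) * resp M2 o l);
  meas_postprocess : forall (O O' : finType) (M : meas O) (q : O -> O' -> R),
    (forall o o', 0 <= q o o') -> (forall o, \sum_(o' : O') q o o' = 1) ->
    exists M' : meas O',
      (forall o', povm M' o' = \sum_(o : O) ((q o o')%:C)%C *: povm M o) /\
      (forall o' l, resp M' o' l = \sum_(o : O) q o o' * resp M o l)
}.

Arguments state {R d Lambda} _ _.
Arguments dist {R d Lambda} _ _.
Arguments povm {R d Lambda} _ {O} _ _.
Arguments resp {R d Lambda} _ {O} _ _ _.

Definition measurement_noncontextual R d (Lambda : measurableType d)
    (T : ontological_model R Lambda) : Prop :=
  forall (O : finType) (M1 M2 : meas T O),
    povm T M1 = povm T M2 -> resp T M1 = resp T M2.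

Definition preparation_noncontextual R d (Lambda : measurableType d)
    (T : ontological_model R Lambda) : Prop :=
  forall P1 P2 : prep T, state T P1 = state T P2 -> dist T P1 = dist T P2.

Definition generalized_noncontextual R d (Lambda : measurableType d)
    (T : ontological_model R Lambda) : Prop :=
  measurement_noncontextual T /\ preparation_noncontextual T.

Definition prob_neq R d (Lambda : measurableType d)
    (T : ontological_model R Lambda) (M : meas T (bool * bool)%type) (l : Lambda) : R :=
  resp T M (true, false) l + resp T M (false, true) l.

(* Main.v *)
Require Import Defs.
From HB Require Import structures.
From mathcomp Require Import all_boot all_order all_algebra.
From mathcomp Require Import all_classical all_reals all_analysis.
From mathcomp Require Import complex.
From mathcomp Require Import measurable_realfun.
From mathcomp Require Import ring lra.
Import Order.TTheory GRing.Theory Num.Theory.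
Set Implicit Arguments. Unset Strict Implicit.
Local Open Scope classical_set_scope.
Local Open Scope ring_scope.

Section S.
Variable R : rcfType.
Local Notation C := R[i].

Lemma adj2_mul m n p (A : 'M[C]_(m,n)) (B : 'M[C]_(n,p)) :
  adj2 (A *m B) = adj2 B *m adj2 A.
Proof. by rewrite /adj2 map_mxM trmx_mul. Qed.

Lemma form_ge0 (w : 'cV[C]_2) : 0 <= (adj2 w *m w) 0 0.
Proof. rewrite mxE; apply: sumr_ge0 => k _; rewrite !mxE mulrC; exact: mulcJ_ge0. Qed.

Lemma psd_proj (A : 'M[C]_2) : adj2 A = A -> A *m A = A -> psd A.
Proof.
move=> hA hAA v.
have -> : adj2 v *m A *m v = adj2 (A *m v) *m (A *m v).
  by rewrite adj2_mul hA -{1}hAA !mulmxA.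
exact: form_ge0.
Qed.

Lemma unit3 (n : 'rV[R]_3) : unit_vec n -> n 0 0 ^+2 + n 0 1 ^+2 + n 0 2 ^+2 = 1.
Proof.
rewrite /unit_vec !big_ord_recl big_ord0 addr0 addrA => <-.
by congr (_ ^+2 + _ ^+2 + _ ^+2); congr (n _ _); apply/val_inj.
Qed.

Definition U (n : 'rV[R]_3) (b : bool) := unsharp_povm 1 n b.

Lemma inv2C : (2^-1 : C) = (2^-1 : R)%:C%C.
Proof. by rewrite fmorphV rmorph_nat. Qed.

Definition ment (t a b c : R) (i j : 'I_2) : C :=
 if (i:nat) == 0%N then (if (j:nat)==0%N then ((2^-1 + t*c) +i* 0)%C else ((t*a) +i* (-(t*b)))%C)
 else (if (j:nat)==0%N then ((t*a) +i* (t*b))%C else ((2^-1 - t*c) +i* 0)%C).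

Lemma Uent e n b i j : unsharp_povm e n b i j = ment (sgnb R b * e / 2) (n 0 0) (n 0 1) (n 0 2) i j.
Proof.
rewrite /unsharp_povm /sigma_dot inv2C !mxE.
move: (sgnb R b * e / 2) => t.
case: i => [[|[|//]] ?]; case: j => [[|[|//]] ?]; rewrite /ment /=.
all: apply/eqP; rewrite eq_complex /=; apply/andP; split; apply/eqP; ring.
Qed.


Ltac cpl := apply/eqP; rewrite eq_complex /=; apply/andP; split; apply/eqP.
Ltac ocase i := case: i => [[|[|//]] ?].

Lemma U_idem (n : 'rV[R]_3) b : unit_vec n -> unsharp_povm 1 n b *m unsharp_povm 1 n b = unsharp_povm 1 n b.
Proof.
move=> /unit3 hn; apply/matrixP => i j.
rewrite mxE !big_ord_recl big_ord0 !Uent /ment /sgnb.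
ocase i; ocase j; case: b => /=; cpl; nra.
Qed.

Lemma U_orth (n : 'rV[R]_3) : unit_vec n -> unsharp_povm 1 n true *m unsharp_povm 1 n false = 0.
Proof.
move=> /unit3 hn; apply/matrixP => i j.
rewrite mxE !big_ord_recl big_ord0 !Uent /ment /sgnb mxE.
ocase i; ocase j => /=; cpl; nra.
Qed.

Lemma U_orth' (n : 'rV[R]_3) : unit_vec n -> unsharp_povm 1 n false *m unsharp_povm 1 n true = 0.
Proof.
move=> /unit3 hn; apply/matrixP => i j.
rewrite mxE !big_ord_recl big_ord0 !Uent /ment /sgnb mxE.
ocase i; ocase j => /=; cpl; nra.
Qed.

Lemma U_herm (n : 'rV[R]_3) b : adj2 (unsharp_povm 1 n b) = unsharp_povm 1 n b.
Proof.
apply/matrixP => i j; rewrite [RHS]Uent /adj2 mxE mxE Uent /ment.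
ocase i; ocase j => /=; cpl; ring.
Qed.

Lemma U_tr (e : R) (n : 'rV[R]_3) b : \tr (unsharp_povm e n b) = 1.
Proof.
rewrite /mxtrace !big_ord_recl big_ord0 !Uent /ment /=; by cpl; field.
Qed.

Lemma U_sum (e : R) (n : 'rV[R]_3) : \sum_(o : bool) unsharp_povm e n o = 1%:M.
Proof.
apply/matrixP => i j; rewrite summxE big_bool /= !Uent /ment mxE /sgnb.
ocase i; ocase j => /=; by cpl; field.
Qed.

Lemma U_mix (e : R) (n : 'rV[R]_3) b : unsharp_povm e n b = (e%:C)%C *: unsharp_povm 1 n b
   + ((1-e)%:C)%C *: \sum_(o : bool) (((2^-1 : R)%:C)%C *: unsharp_povm 1 n o).
Proof.
apply/matrixP => i j; rewrite [LHS]Uent.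
move: (unsharp_povm 1 n) (Uent 1 n) => F hF.
rewrite !mxE summxE big_bool /= !mxE !hF /ment /sgnb.
ocase i; ocase j; case: b => /=; by cpl; field.
Qed.

Lemma U_psd (n : 'rV[R]_3) b : unit_vec n -> psd (unsharp_povm 1 n b).
Proof. by move=> hn; apply: psd_proj; [exact: U_herm | exact: U_idem]. Qed.


Lemma U_povm (n : 'rV[R]_3) : unit_vec n -> is_povm (unsharp_povm 1 n).
Proof. by move=> hn; split; [move=> b; exact: U_psd | exact: U_sum]. Qed.

Lemma U_density (n : 'rV[R]_3) b : unit_vec n -> is_density (unsharp_povm 1 n b).
Proof. by move=> hn; split; [exact: U_psd | exact: U_tr]. Qed.

Lemma U_born (n : 'rV[R]_3) b c : unit_vec n ->
  \tr (unsharp_povm 1 n b *m unsharp_povm 1 n c) = if b == c then 1 else 0.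
Proof.
move=> hn; case: b; case: c => /=;
  rewrite ?U_idem ?U_tr ?U_orth ?U_orth' ?mxtrace0 //.
Qed.

Lemma sum2 (F : 'I_2 -> C) : \sum_(i<2) F i = F 0 + F 1.
Proof. by rewrite !big_ord_recl big_ord0 addr0; congr (F _ + F _); apply/val_inj. Qed.

Lemma qform (A : 'M[C]_2) (v : 'cV[C]_2) : (adj2 v *m A *m v) 0 0 =
  (v 0 0)^*%C * A 0 0 * v 0 0 + (v 0 0)^*%C * A 0 1 * v 1 0
  + (v 1 0)^*%C * A 1 0 * v 0 0 + (v 1 0)^*%C * A 1 1 * v 1 0.
Proof.
rewrite /adj2 mxE sum2 !mxE !sum2 !mxE.
ring.
Qed.

Lemma compl_density (rho : 'M[C]_2) : is_density rho -> is_density (1%:M - rho).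
Proof.
case=> hpsd htr; split; last first.
  move: htr; rewrite /mxtrace !sum2 !mxE /= => htr.
  by rewrite -htr; ring.
move=> v.
pose w : 'cV[C]_2 := \col_(k < 2) (if (k : nat) == 0%N then - (v 1 0)^*%C else (v 0 0)^*%C).
suff -> : (adj2 v *m (1%:M - rho) *m v) 0 0 = (adj2 w *m rho *m w) 0 0 by exact: hpsd.
have cN : forall z : C, (- z)^*%C = - z^*%C by move=> [a b].
move: htr; rewrite /mxtrace sum2 !qform /w !mxE /= cN !conjcK => htr.
have -> : rho 1 1 = 1 - rho 0 0 by rewrite -htr; ring.
ring.
Qed.

Lemma mix_half (n : 'rV[R]_3) (rho : 'M[C]_2) :
 ((2^-1 : R)%:C)%C *: rho + ((1 - 2^-1 : R)%:C)%C *: (1%:M - rho)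
 = ((2^-1 : R)%:C)%C *: unsharp_povm 1 n true + ((1 - 2^-1 : R)%:C)%C *: unsharp_povm 1 n false.
Proof.
apply/matrixP => i j.
move: (unsharp_povm 1 n) (Uent 1 n) => F hF.
rewrite !mxE !hF /ment /sgnb.
ocase i; ocase j => /=; case: (rho _ _) => a b; by cpl; field.
Qed.

End S.

Lemma sum_bb (V : nmodType) (G : bool * bool -> V) :
  \sum_(o : bool * bool) G o = G (true,true) + G (true,false) + G (false,true) + G (false,false).
Proof.
rewrite (_ : \sum_(o : bool*bool) G o = \sum_(a : bool) \sum_(b : bool) G (a,b)).
  by rewrite !big_bool /= addrA.
by rewrite pair_bigA; apply: eq_bigr => -[a b].
Qed.

Section Model.
Variables (R : realType) (d : measure_display) (Lambda : measurableType d)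
  (T : ontological_model R Lambda).

Lemma marg1 (M : meas T (bool * bool)%type) (E1 E2 : bool -> 'M[R[i]]_2) F :
  is_joint_measurement E1 E2 F -> povm T M = F ->
  exists M1 : meas T bool, povm T M1 = E1 /\
    forall l, resp T M1 true l = resp T M (true,true) l + resp T M (true,false) l.
Proof.
move=> [_ [h1 _]] hM.
have [||M1 [hp hr]] := meas_postprocess M (q := fun o o' => if o.1 == o' then 1 else 0).
- by move=> o o'; case: ifP.
- by move=> [a b]; rewrite big_bool /=; case: a; rewrite /= ?addr0 ?add0r.
exists M1; split; last by move=> l; rewrite hr sum_bb /=; ring.
apply/funext => o'; rewrite hp sum_bb hM -h1 big_bool /=.
by case: o' => /=; rewrite ?rmorph1 ?rmorph0 ?scale1r ?scale0r ?addr0 ?add0r.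
Qed.

Lemma marg2 (M : meas T (bool * bool)%type) (E1 E2 : bool -> 'M[R[i]]_2) F :
  is_joint_measurement E1 E2 F -> povm T M = F ->
  exists M1 : meas T bool, povm T M1 = E2 /\
    forall l, resp T M1 true l = resp T M (true,true) l + resp T M (false,true) l.
Proof.
move=> [_ [_ h1]] hM.
have [||M1 [hp hr]] := meas_postprocess M (q := fun o o' => if o.2 == o' then 1 else 0).
- by move=> o o'; case: ifP.
- by move=> [a b]; rewrite big_bool /=; case: b; rewrite /= ?addr0 ?add0r.
exists M1; split; last by move=> l; rewrite hr sum_bb /=; ring.
apply/funext => o'; rewrite hp sum_bb hM -h1 big_bool /=.
by case: o' => /=; rewrite ?rmorph1 ?rmorph0 ?scale1r ?scale0r ?addr0 ?add0r.
Qed.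

Lemma decomp (hMNC : measurement_noncontextual T) (eta : R) (n : 'rV[R]_3)
  (S M : meas T bool) : povm T S = unsharp_povm 1 n -> povm T M = unsharp_povm eta n ->
  0 <= eta <= 1 ->
  forall l, resp T M true l = eta * resp T S true l + (1 - eta) / 2.
Proof.
move=> hS hM heta l.
have [||Mc [hc1 hc2]] := meas_postprocess (O' := bool) S (q := fun _ _ => (2^-1 : R)).
- by move=> _ _; rewrite invr_ge0.
- by move=> _; rewrite big_bool /=; field.
have [Mm [hm1 hm2]] := meas_mixture S Mc heta.
have e : povm T Mm = povm T M.
  apply/funext => o; rewrite hm1 hM (U_mix eta n o) hS.
  by congr (_ + _ *: _); rewrite hc1 hS.
rewrite -(hMNC _ _ _ e) hm2 hc2 -big_distrr /= resp_sum1.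
by field.
Qed.

End Model.

Lemma half_eq0 (R : realType) (x y : \bar R) : (0 <= x)%E -> (0 <= y)%E ->
  ((2^-1)%:E * x + (1 - 2^-1)%:E * y)%E = 0%E -> x = 0%E.
Proof.
case: x => [x| |]; case: y => [y| |] //=; rewrite ?lee_fin => hx hy.
- rewrite -!EFinM -EFinD => -[] h; congr (_%:E); lra.
all: have h1 : (0 < (2^-1 : R)%:E)%E by rewrite lte_fin; lra.
all: have h2 : (0 < (1 - 2^-1 : R)%:E)%E by rewrite lte_fin; lra.
all: by rewrite ?(gt0_muley h1) ?(gt0_muley h2) ?addey ?addye.
Qed.

Section Model.
Variables (R : realType) (d : measure_display) (Lambda : measurableType d)
  (T : ontological_model R Lambda).

Lemma null_of_int0 (P : prep T) (S : meas T bool) o :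
  (\int[dist T P]_l (resp T S o l)%:E)%E = 0%E ->
  exists B, [/\ measurable B, dist T P B = 0%E &
     forall l, ~ B l -> resp T S o l = 0].
Proof.
move=> h.
have mf := (measurable_EFinP _ _).2 (resp_measurable S o).

have := (ae_eq_integral_abs (dist T P) measurableT mf).1.
case.
  rewrite -h; apply: eq_integral => l _ /=.
  by rewrite ger0_norm //; exact: resp_ge0.
rewrite /ae_eq /prop_near1 /nbhs /=; move=> B [mB B0 sB]; exists B; split => // l nB.
case: (pselect (resp T S o l = 0)) => // hne; exfalso; apply: nB; apply: sB => /= h'.
by apply: hne; case: (h' I).
Qed.

Lemma det_ae (hNC : generalized_noncontextual T) (n : 'rV[R]_3) (S : meas T bool) :
  unit_vec n -> povm T S = unsharp_povm 1 n -> forall P : prep T,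
  exists B, [/\ measurable B, dist T P B = 0%E &
     forall l, ~ B l -> resp T S true l = 0 \/ resp T S true l = 1].
Proof.
move=> hn hS P.
have [Pt hPt] := prep_complete T (U_density true hn).
have [Pf hPf] := prep_complete T (U_density false hn).
have [Bt [mBt Bt0 sBt]] : exists B, [/\ measurable B, dist T Pt B = 0%E &
     forall l, ~ B l -> resp T S false l = 0].
  apply: null_of_int0; rewrite born_rule hPt hS U_born //=.
have [Bf [mBf Bf0 sBf]] : exists B, [/\ measurable B, dist T Pf B = 0%E &
     forall l, ~ B l -> resp T S true l = 0].
  apply: null_of_int0; rewrite born_rule hPf hS U_born //=.
have hp : 0 <= (2^-1 : R) <= 1 by apply/andP; split; lra.
have [Q0 [hQ0s hQ0d]] := prep_mixture Pt Pf hp.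
have [Pc hPc] := prep_complete T (compl_density (state_density P)).
have [Q1 [hQ1s hQ1d]] := prep_mixture P Pc hp.
have eQ : dist T Q1 = dist T Q0.
  apply: hNC.2; rewrite hQ1s hQ0s hPc hPt hPf; exact: mix_half.
have mB : measurable (Bt `&` Bf) by exact: measurableI.
exists (Bt `&` Bf); split => //.
  have h0 : dist T Q1 (Bt `&` Bf) = 0%E.
    rewrite eQ hQ0d //.
    have -> : dist T Pt (Bt `&` Bf) = 0%E.
      by apply/eqP; rewrite -measure_le0 -Bt0; apply: le_measure; rewrite ?inE //; exact: subIsetl.
    have -> : dist T Pf (Bt `&` Bf) = 0%E.
      by apply/eqP; rewrite -measure_le0 -Bf0; apply: le_measure; rewrite ?inE //; exact: subIsetr.
    by rewrite !mule0 adde0.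
  apply: (@half_eq0 R _ (dist T Pc (Bt `&` Bf))) => //.
  by rewrite -hQ1d.
move=> l nB.
case: (pselect (Bt l)) => hBt; last first.
  right; have := resp_sum1 S l; rewrite big_bool /= (sBt _ hBt) addr0 //.
case: (pselect (Bf l)) => hBf; last by left; exact: sBf.
by exfalso; apply: nB.
Qed.

End Model.

Lemma pair_bound (R : realType) (eta si sj a b c e : R) :
  0 <= a -> 0 <= b -> 0 <= c -> 0 <= e -> a + b + c + e = 1 ->
  a + b = eta * si + (1 - eta) / 2 -> a + c = eta * sj + (1 - eta) / 2 ->
  (si = 0 \/ si = 1) -> (sj = 0 \/ sj = 1) -> 0 <= eta <= 1 ->
  b + c <= 1 - eta * (1 - (si - sj) ^+ 2).
Proof.
move=> ha hb hc he hs h1 h2 hsi hsj /andP[e0 e1].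
case: hsi => ?; case: hsj => ?; subst; rewrite expr2; lra.
Qed.

Unset Implicit Arguments.

Theorem mainTheorem15 (R : realType) (d : measure_display) (Lambda : measurableType d)
  (T : ontological_model R Lambda)
  (n1 n2 n3 : 'rV[R]_3) (eta : R)
  (F12 F13 F23 : (bool * bool)%type -> 'M[R[i]]_2)
  (M12 M13 M23 : meas T (bool * bool)%type) :
  generalized_noncontextual T ->
  unit_vec n1 -> unit_vec n2 -> unit_vec n3 ->
  0 <= eta <= 1 ->
  is_joint_measurement (unsharp_povm eta n1) (unsharp_povm eta n2) F12 ->
  is_joint_measurement (unsharp_povm eta n1) (unsharp_povm eta n3) F13 ->
  is_joint_measurement (unsharp_povm eta n2) (unsharp_povm eta n3) F23 ->
  povm T M12 = F12 -> povm T M13 = F13 -> povm T M23 = F23 ->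
  forall P : prep T,
    {ae dist T P, forall l : Lambda,
      3^-1 * (prob_neq M12 l + prob_neq M13 l + prob_neq M23 l) <= 1 - eta / 3}.
Proof.
move=> hNC hn1 hn2 hn3 heta hJ12 hJ13 hJ23 hM12 hM13 hM23 P.
have [S1 hS1] := meas_complete T (U_povm hn1).
have [S2 hS2] := meas_complete T (U_povm hn2).
have [S3 hS3] := meas_complete T (U_povm hn3).
have [B1 [mB1 B10 hB1]] := det_ae hNC hn1 hS1 P.
have [B2 [mB2 B20 hB2]] := det_ae hNC hn2 hS2 P.
have [B3 [mB3 B30 hB3]] := det_ae hNC hn3 hS3 P.
have [A12 [pA12 rA12]] := marg1 hJ12 hM12.
have [C12 [pC12 rC12]] := marg2 hJ12 hM12.
have [A13 [pA13 rA13]] := marg1 hJ13 hM13.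
have [C13 [pC13 rC13]] := marg2 hJ13 hM13.
have [A23 [pA23 rA23]] := marg1 hJ23 hM23.
have [C23 [pC23 rC23]] := marg2 hJ23 hM23.
have dA12 := decomp hNC.1 hS1 pA12 heta.
have dC12 := decomp hNC.1 hS2 pC12 heta.
have dA13 := decomp hNC.1 hS1 pA13 heta.
have dC13 := decomp hNC.1 hS3 pC13 heta.
have dA23 := decomp hNC.1 hS2 pA23 heta.
have dC23 := decomp hNC.1 hS3 pC23 heta.
rewrite /prop_near1 /nbhs /=.
exists (B1 `|` B2 `|` B3); split.
- by apply: measurableU => //; apply: measurableU.
- rewrite measureU0 //; last exact: measurableU.
  by rewrite measureU0.
move=> l /= hl; case: (pselect ((B1 `|` B2 `|` B3) l)) => // nB; exfalso; apply: hl.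
have nB1 : ~ B1 l by move=> h; apply: nB; left; left.
have nB2 : ~ B2 l by move=> h; apply: nB; left; right.
have nB3 : ~ B3 l by move=> h; apply: nB; right.
have X12 := pair_bound (resp_ge0 M12 (true,true) l) (resp_ge0 M12 (true,false) l)
  (resp_ge0 M12 (false,true) l) (resp_ge0 M12 (false,false) l)
  (etrans (esym (sum_bb _)) (resp_sum1 M12 l))
  (etrans (esym (rA12 l)) (dA12 l)) (etrans (esym (rC12 l)) (dC12 l))
  (hB1 _ nB1) (hB2 _ nB2) heta.
have X13 := pair_bound (resp_ge0 M13 (true,true) l) (resp_ge0 M13 (true,false) l)
  (resp_ge0 M13 (false,true) l) (resp_ge0 M13 (false,false) l)
  (etrans (esym (sum_bb _)) (resp_sum1 M13 l))
  (etrans (esym (rA13 l)) (dA13 l)) (etrans (esym (rC13 l)) (dC13 l))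
  (hB1 _ nB1) (hB3 _ nB3) heta.
have X23 := pair_bound (resp_ge0 M23 (true,true) l) (resp_ge0 M23 (true,false) l)
  (resp_ge0 M23 (false,true) l) (resp_ge0 M23 (false,false) l)
  (etrans (esym (sum_bb _)) (resp_sum1 M23 l))
  (etrans (esym (rA23 l)) (dA23 l)) (etrans (esym (rC23 l)) (dC23 l))
  (hB2 _ nB2) (hB3 _ nB3) heta.
rewrite /prob_neq.
move: X12 X13 X23 (hB1 _ nB1) (hB2 _ nB2) (hB3 _ nB3).
move: (resp T S1 true l) (resp T S2 true l) (resp T S3 true l) => s1 s2 s3.
move=> X12 X13 X23 [] e1 [] e2 [] e3; move: X12 X13 X23; rewrite e1 e2 e3 => X12 X13 X23.
all: case/andP: heta => e0 e1'; nra.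
Qed.
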